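(* Let $(F,d)$ be a $\sigma$-compact metric space whose Borel $\sigma$-algebra makes it a standard Borel space, and let $\mathcal{N}$ be a Radon measure on $F$. Let $R>0$ and let $p\in L^1_{\mathcal{N}}$ be continuous. Let $\hat y$ lie in the interior of $\mathrm{Supp}(\mathcal{N})$, and assume $y\mapsto\exp(-a\,d_R^2(y,\hat y))\in L^1_{\mathcal{N}}$ for every $a>0$. Then $$\int_F\frac{e^{-a\,d_R(y,\hat y)^2}}{\int_F e^{-a\,d(y',\hat y)^2}\,d\mathcal{N}(y')}\,p(y)\,d\mathcal{N}(y)\xrightarrow[a\to\infty]{}p(\hat y).$$
   Context: $d_R=\min(d,R)$. $\mathrm{Supp}(\mathcal{N})$ is the complement of the union of all $\mathcal{N}$-null open sets. *)

(* Defs.v *)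
From Stdlib Require List.
From HB Require Import structures.
From mathcomp Require Import all_boot all_order all_algebra.
From mathcomp Require Import all_classical all_reals all_analysis.
Set Implicit Arguments. Unset Strict Implicit. Unset Printing Implicit Defensive.
Import Order.TTheory GRing.Theory Num.Theory.
Local Open Scope classical_set_scope.
Local Open Scope ring_scope.

Section MetricDefs.
Context {R : realType} {T : Type}.

Definition is_metric (e : T -> T -> R) : Prop :=
  [/\ forall x y, 0 <= e x y,
      forall x y, e x y = 0 <-> x = y,
      forall x y, e x y = e y x &
      forall x y z, e x z <= e x y + e y z].

Definition mball (e : T -> T -> R) (x : T) (r : R) : set T :=
  [set y | e x y < r].

Definition mopen (e : T -> T -> R) (A : set T) : Prop :=
  forall x, A x -> exists2 r : R, 0 < r & mball e x r `<=` A.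

Definition mcompact (e : T -> T -> R) (K : set T) : Prop :=
  forall (I : Type) (U : I -> set T), (forall i, mopen e (U i)) ->
    K `<=` \bigcup_i U i ->
    exists s : seq I, forall x, K x -> exists2 i, List.In i s & U i x.

Definition sigma_compact (e : T -> T -> R) : Prop :=
  exists K : nat -> set T, (forall n, mcompact e (K n)) /\ \bigcup_n K n = setT.

Definition mseparable (e : T -> T -> R) : Prop :=
  exists D : set T, countable D /\
    forall x r, 0 < r -> exists2 y, D y & e x y < r.

Definition mcomplete (e : T -> T -> R) : Prop :=
  forall u : nat -> T,
    (forall eps, 0 < eps -> exists N, forall m n, (N <= m)%N -> (N <= n)%N ->
        e (u m) (u n) < eps) ->
    exists l, forall eps, 0 < eps -> exists N, forall n, (N <= n)%N -> e (u n) l < eps.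

Definition mcontinuous (e : T -> T -> R) (f : T -> R) : Prop :=
  forall x eps, 0 < eps -> exists2 delta, 0 < delta &
    forall y, e x y < delta -> `|f y - f x| < eps.

Definition minterior (e : T -> T -> R) (A : set T) : set T :=
  [set x | exists2 r, 0 < r & mball e x r `<=` A].

End MetricDefs.

Section MeasDefs.
Context {d : measure_display} {F : measurableType d} {R : realType}.

Definition borel_of (e : F -> F -> R) : Prop :=
  (@measurable d F) = <<s mopen e >>.

(* standard Borel space: the sigma-algebra is the Borel sigma-algebra of
   some Polish (complete separable metric) topology on F *)
Definition standard_borel : Prop :=
  exists e : F -> F -> R,
    [/\ is_metric e, mcomplete e, mseparable e & borel_of e].

Definition radon (e : F -> F -> R) (N : {measure set F -> \bar R}) : Prop :=
  (forall x, exists2 r, 0 < r & (N (mball e x r) < +oo)%E) /\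
  (forall A, measurable A ->
     N A = ereal_sup [set N K | K in [set K | mcompact e K /\ K `<=` A]]).

Definition supp (e : F -> F -> R) (N : {measure set F -> \bar R}) : set F :=
  ~` \bigcup_(U in [set U | mopen e U /\ N U = 0%E]) U.

End MeasDefs.

(* Main.v *)
Require Import Defs.
From mathcomp Require Import all_boot all_order all_algebra.
From mathcomp Require Import all_classical all_reals all_analysis.
From mathcomp Require Import lra ring measurable_realfun.
Import Order.TTheory GRing.Theory Num.Theory.
Import numFieldNormedType.Exports.
Local Open Scope classical_set_scope.
Local Open Scope ring_scope.

Lemma mopen_ball {R : realType} {T : Type} (e : T -> T -> R) :
  is_metric e -> forall x r, mopen e (mball e x r).
Proof.
move=> [_ _ _ tri] x r y; rewrite /mball/= => hy.
exists (r - e x y); first by rewrite subr_gt0.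
move=> z; rewrite /mball/= => hz; have := tri x y z; lra.
Qed.

Lemma mcont_meas {dsp : measure_display} {F : measurableType dsp} {R : realType}
  {dist : F -> F -> R} {f : F -> R} :
  borel_of dist -> mcontinuous dist f -> measurable_fun setT f.
Proof.
move=> Hb Hc; apply: (measurability _ (measurable_realfun.RGenOpens.measurableE R)).
move=> _ [_ [a [b ->]] <-]; rewrite Hb; apply: sub_sigma_algebra.
move=> x [_ /=]; rewrite in_itv /= => /andP[ax xb].
have [dl dl0 Hdl] := Hc x (Num.min (f x - a) (b - f x)) ltac:(rewrite lt_min !subr_gt0 ax xb//).
exists dl => // y /Hdl; rewrite lt_min !ltr_norml => /andP[/andP[h1 h2] /andP[h3 h4]].
split => //=; rewrite in_itv /=; apply/andP; split; lra.
Qed.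


Lemma bounded_by {T : Type} {R : realType} (g : T -> R) (A : set T) M :
  (forall y, `|g y| <= M) -> [bounded g x | x in A].
Proof.
move=> hM; exists M; split; first exact: num_real.
by move=> M' hM' y _ /=; apply: le_trans (hM y) _; apply: ltW.
Qed.

Lemma bd_integrable {dsp : measure_display} {F : measurableType dsp} {R : realType}
  {N : {measure set F -> \bar R}} {g : F -> R} {M} :
  (N setT < +oo)%E -> measurable_fun setT g -> (forall y, `|g y| <= M) ->
  N.-integrable setT (EFin \o g).
Proof.
move=> hN mg hM; apply: measurable_bounded_integrable => //.
exact: bounded_by hM.
Qed.

Lemma bdM_integrable {dsp : measure_display} {F : measurableType dsp} {R : realType}
  {N : {measure set F -> \bar R}} {g f : F -> R} {M} :
  measurable_fun setT g -> (forall y, `|g y| <= M) ->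
  N.-integrable setT (EFin \o f) ->
  N.-integrable setT (EFin \o (fun y => g y * f y)).
Proof.
move=> mg hM hf.
have := integrableMl measurableT hf mg (@bounded_by _ _ g setT M hM).
apply: eq_integrable => // y _ /=; by rewrite mulrC EFinM.
Qed.

Lemma intB {dsp : measure_display} {F : measurableType dsp} {R : realType}
  {N : {measure set F -> \bar R}} {f g : F -> R} :
  N.-integrable setT (EFin \o f) -> N.-integrable setT (EFin \o g) ->
  N.-integrable setT (EFin \o (fun y => f y - g y)).
Proof.
move=> hf hg; have := integrableB measurableT hf hg.
by apply: eq_integrable => // y _ /=; rewrite EFinB.
Qed.

Lemma intD {dsp : measure_display} {F : measurableType dsp} {R : realType}
  {N : {measure set F -> \bar R}} {f g : F -> R} :
  N.-integrable setT (EFin \o f) -> N.-integrable setT (EFin \o g) ->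
  N.-integrable setT (EFin \o (fun y => f y + g y)).
Proof.
move=> hf hg; have := integrableD measurableT hf hg.
by apply: eq_integrable => // y _ /=; rewrite EFinD.
Qed.

Theorem lemmaB2 (R : realType) (dsp : measure_display) (F : measurableType dsp)
  (dist : F -> F -> R)
  (Hmetric : is_metric dist)
  (Hsigma : sigma_compact dist)
  (Hborel : borel_of dist)
  (Hstd : standard_borel (F := F) (R := R))
  (N : {measure set F -> \bar R})
  (Hradon : radon dist N)
  (Rad : R) (HR : 0 < Rad)
  (p : F -> R)
  (Hp1 : N.-integrable setT (fun y => (p y)%:E))
  (Hpc : mcontinuous dist p)
  (yhat : F)
  (Hyhat : minterior dist (supp dist N) yhat)
  (Hexp : forall a : R, 0 < a ->
     N.-integrable setT (fun y => (expR (- a * (Num.min (dist y yhat) Rad) ^+ 2))%:E)) :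
  (fun a : R =>
     (\int[N]_y ((expR (- a * (Num.min (dist y yhat) Rad) ^+ 2)
                 / Rintegral N setT (fun y' => expR (- a * (dist y' yhat) ^+ 2)))
                * p y)%:E)%E)
    @ +oo --> (p yhat)%:E.
Proof.
have [d0 d_eq dsym tri] := Hmetric.
pose e := fun y => dist y yhat.
have e0 : forall y, 0 <= e y by move=> y; exact: d0.
have me : measurable_fun setT e.
  apply: (mcont_meas Hborel) => x eps eps0; exists eps => // y hy.
  rewrite /e ltr_norml; have := tri x y yhat; have := tri y x yhat.
  rewrite (dsym y x); lra.
have mp : measurable_fun setT p := mcont_meas Hborel Hpc.
pose U := fun a y => expR (- a * e y ^+ 2).
pose W := fun a y => expR (- a * (Num.min (e y) Rad) ^+ 2).
have mU : forall a, measurable_fun setT (U a).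
  move=> a; apply: measurableT_comp; first exact: measurable_realfun.measurable_expR.
  by apply: measurable_realfun.measurable_funM => //; exact: measurable_realfun.measurable_funX.
have mW : forall a, measurable_fun setT (W a).
  move=> a; apply: measurableT_comp; first exact: measurable_realfun.measurable_expR.
  apply: measurable_realfun.measurable_funM => //; apply: measurable_realfun.measurable_funX.
  exact: (measurable_realfun.measurable_minr me (measurable_cst Rad)).
have hNfin : (N setT < +oo)%E.
  have /integrableP[_ hint] := Hexp 1 ltr01.
  have hle : ((expR (- Rad ^+ 2))%:E * N setT <=
     \int[N]_(x in setT) `|(expR (- 1 * Num.min (dist x yhat) Rad ^+ 2))%:E|)%E.
    rewrite -integral_cst //; apply: ge0_le_integral => //.
    - by move=> y _; rewrite lee_fin expR_ge0.
    - apply: (measurableT_comp (f:=abse)) => //; exact: measurable_int (Hexp 1 ltr01).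
    - move=> y _ /=; rewrite lee_fin ger0_norm ?expR_ge0// ler_expR.
      have := e0 y; have : Num.min (e y) Rad <= Rad by rewrite ge_min lexx orbT.
      have : 0 <= Num.min (e y) Rad by rewrite le_min e0 ltW.
      rewrite /e; nra.
  move: hle hint; case: (N setT) => [r| |] //= h1 h2.
  - exact: ltry.
  - by move: h1; rewrite gt0_muley ?lte_fin ?expR_gt0// => /(le_lt_trans)/(_ h2); rewrite ltxx.
have U01 : forall a, 0 <= a -> forall y, 0 <= U a y <= 1.
  move=> a a0 y; rewrite expR_ge0 expR_le1 /=; have := sqr_ge0 (e y); nra.
have W01 : forall a, 0 <= a -> forall y, 0 <= W a y <= 1.
  move=> a a0 y; rewrite expR_ge0 expR_le1 /=.
  have := sqr_ge0 (Num.min (e y) Rad); nra.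
have Uint : forall a, 0 <= a -> N.-integrable setT (EFin \o U a).
  move=> a a0; apply: (bd_integrable (M:=1)) => // y.
  by have /andP[h1 h2] := U01 a a0 y; rewrite ger0_norm.
have cint : forall k : R, N.-integrable setT (EFin \o (fun=> k)).
  move=> k; apply: (bd_integrable (M:=`|k|)) => //.
have WDint : forall a Da, 0 <= a -> N.-integrable setT (EFin \o (fun y => W a y / Da * p y)).
  move=> a Da a0; apply: (bdM_integrable (M := `|Da^-1|)) => //.
    exact: measurable_funM (mW a) (measurable_cst _).
  move=> y; have /andP[h1 h2] := W01 a a0 y.
  by rewrite normrM (ger0_norm h1) ler_piMl.
apply: cvg_EFin.
  exists 0; split; first exact: num_real.
  move=> a a0; apply: integrable_fin_num => //; exact: (WDint a _ (ltW a0)).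
apply/cvgrPdist_le => eps eps0.
have [dl0 dl00 Hdl0] := Hpc yhat (eps / 2) ltac:(by rewrite divr_gt0).
pose dl := Num.min dl0 (Rad / 2).
have dl_pos : 0 < dl by rewrite lt_min dl00 divr_gt0.
have dlR : dl <= Rad / 2 by rewrite ge_min lexx orbT.
have dl_le : dl <= dl0 by rewrite ge_min lexx.
pose r := dl / 2.
pose B := mball dist yhat r.
have mB : measurable B.
  by rewrite Hborel; apply: sub_sigma_algebra; exact: mopen_ball.
have dxx : dist yhat yhat = 0 by apply/(d_eq yhat yhat).
have NB0 : (0 < N B)%E.
  rewrite lt0e measure_ge0 andbT; apply/eqP => hB0.
  have [r0 r00 Hsub] := Hyhat.
  apply: (Hsub yhat); first by rewrite /mball /= dxx.
  exists B; last by rewrite /B /mball /= dxx divr_gt0.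
  split => //; exact: mopen_ball.
have hNBfin : (N B < +oo)%E.
  apply: le_lt_trans hNfin; apply: le_measure; rewrite ?inE //.
pose m := fine (N B).
have m0 : 0 < m by apply: fine_gt0; rewrite NB0 hNBfin.
have NBm : N B = m%:E by rewrite fineK // ge0_fin_numE.
pose C := Rintegral N setT (fun y => `|p y|) + `|p yhat| * fine (N setT).
have C0 : 0 <= C.
  rewrite /C addr_ge0 ?mulr_ge0 ?fine_ge0 ?measure_ge0 //.
  by apply: integral_ge0 => y _; rewrite lee_fin normr_ge0.
pose c := dl ^+ 2 - r ^+ 2.
have c0 : 0 < c by rewrite /c /r; nra.
pose q := m * c * eps.
have q0 : 0 < q by rewrite /q !mulr_gt0.
exists (2 * C / q + 1); split; first exact: num_real.
move=> a aM.
have a0 : 0 < a.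
  have : 0 <= 2 * C / q by rewrite divr_ge0 ?mulr_ge0 // ltW.
  lra.
rewrite /comp.
change (`|p yhat - Rintegral N setT (fun y => W a y / Rintegral N setT (U a) * p y)| <= eps).
set Da := Rintegral N setT (U a).
have mind : measurable_fun setT (fun y => expR (- a * r ^+ 2) * \1_B y).
  exact: (measurable_funM (measurable_cst _) (measurable_indic mB)).
have hDa : expR (- a * r ^+ 2) * m <= Da.
  have -> : expR (- a * r ^+ 2) * m = Rintegral N setT (fun y => expR (- a * r ^+ 2) * \1_B y).
    rewrite RintegralZl //; last first.
      apply: (bd_integrable (M:=1)) => //.
      by move=> y; rewrite indicE; case: (_ \in _) => /=; rewrite ?normr1 ?normr0.
    by congr (_ * _); rewrite /Rintegral integral_indic // setIT NBm.
  apply: le_Rintegral => //; last first.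
    move=> y _; rewrite indicE; case: (boolP (y \in B)) => [/set_mem hy|_] /=.
      rewrite mulr1 ler_expR; move: hy; rewrite /B /mball /= (dsym yhat y) => hy.
      have := e0 y; rewrite /e => hy0.
      have h2 : dist y yhat ^+ 2 <= r ^+ 2 by nra.
      nra.
    by rewrite mulr0 expR_ge0.
  - exact: Uint (ltW a0).
  - apply: (bd_integrable (M:=expR (- a * r ^+ 2))) => // y.
    rewrite indicE normrM ger0_norm ?expR_ge0 //.
    by case: (_ \in _) => /=; rewrite ?normr1 ?normr0 ?mulr1 ?mulr0 ?expR_ge0.
have Da0 : 0 < Da.
  by apply: lt_le_trans hDa; rewrite mulr_gt0 ?expR_gt0.
pose K := expR (- a * dl ^+ 2) / Da.
have K0 : 0 <= K by rewrite /K divr_ge0 ?expR_ge0 // ltW.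
have hK : K * C <= eps / 2.
  pose E1 := expR (- a * dl ^+ 2).
  pose E2 := expR (- a * r ^+ 2).
  pose Ec := expR (a * c).
  have hE : E1 * Ec = E2 by rewrite /E1 /Ec /E2 -expRD /c; congr expR; ring.
  have hEc : 1 + a * c <= Ec := expR_ge1Dx _.
  have haq : 2 * C < a * q.
    have hq : 2 * C / q * q = 2 * C by rewrite divfK // gt_eqF.
    nra.
  have h1 : a * c <= Ec by lra.
  have h2 : eps / 2 * (a * c) * m <= eps / 2 * Ec * m.
    by rewrite ler_wpM2r ?ler_wpM2l // ltW // divr_gt0.
  have h3 : C <= eps / 2 * Ec * m.
    apply: le_trans h2; rewrite /q in haq; nra.
  have E10 : 0 < E1 by exact: expR_gt0.
  rewrite /K -/E1 mulrAC ler_pdivrMr //.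
  apply: (@le_trans _ _ (E1 * (eps / 2 * Ec * m))).
    by rewrite ler_wpM2l // ltW.
  apply: (@le_trans _ _ (eps / 2 * (E2 * m))).
    by rewrite -hE [X in X <= _](_ : _ = eps / 2 * (E1 * Ec * m)) //; ring.
  by rewrite ler_wpM2l // ltW // divr_gt0.
have iU := Uint a (ltW a0).
have i1 : N.-integrable setT (EFin \o (fun y => p yhat / Da * U a y)).
  apply: (bdM_integrable (M := `|p yhat / Da|)) => //.
have i2 := WDint a Da (ltW a0).
have iA : N.-integrable setT (EFin \o (fun y => eps / 2 * (U a y / Da))).
  apply: (bd_integrable (M := eps / 2 / Da)) => //.
    exact: measurable_funM (measurable_cst _) (measurable_funM (mU a) (measurable_cst _)).
  move=> y; have /andP[h1 h2] := U01 a (ltW a0) y.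
  rewrite ger0_norm; last by rewrite !mulr_ge0 // ?invr_ge0 ltW.
  rewrite mulrA; apply: ler_wpM2r; first by rewrite invr_ge0 ltW.
  have e20 : 0 < eps / 2 by rewrite divr_gt0.
  nra.

have iP : N.-integrable setT (EFin \o (fun y => `|p y| + `|p yhat|)).
  apply: intD; last exact: cint.
  exact: (integrable_norm Hp1).
have iB : N.-integrable setT (EFin \o (fun y => K * (`|p y| + `|p yhat|))).
  apply: (bdM_integrable (g := fun=> K) (M := `|K|)) => //.
have hp : p yhat = Rintegral N setT (fun y => p yhat / Da * U a y).
  rewrite RintegralZl //.
  rewrite (_ : Rintegral N setT (fun x => U a x) = Da) //.
  by rewrite divfK // gt_eqF.
rewrite {1}hp -RintegralB //.
apply: le_trans (le_normr_Rintegral _ _) _ => //; first exact: intB.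
apply: (@le_trans _ _ (Rintegral N setT
    (fun y => eps / 2 * (U a y / Da) + K * (`|p y| + `|p yhat|)))).
  apply: le_Rintegral => //.
  - exact: (integrable_norm (intB i1 i2)).
  - exact: intD.
  move=> y _ /=.
  have /andP[u0 u1] := U01 a (ltW a0) y.
  have /andP[w0 w1] := W01 a (ltW a0) y.
  have Di0 : 0 < Da^-1 by rewrite invr_gt0.
  have n1 := normr_ge0 (p y); have n2 := normr_ge0 (p yhat).
  have [hy|hy] := ltP (e y) dl.
  - have hmin : Num.min (e y) Rad = e y by apply/min_idPl; lra.
    have hWU : W a y = U a y by rewrite /W /U hmin.
    rewrite hWU.
    have hc : `|p y - p yhat| < eps / 2.
      by apply: Hdl0; rewrite dsym; rewrite /e in hy; lra.
    have -> : p yhat / Da * U a y - U a y / Da * p y = (U a y / Da) * (p yhat - p y) by ring.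
    rewrite normrM (ger0_norm (_ : 0 <= U a y / Da)); last by rewrite mulr_ge0 // ltW.
    rewrite distrC.
    have : 0 <= U a y / Da by rewrite mulr_ge0 // ltW.
    have : 0 <= K * (`|p y| + `|p yhat|) by rewrite mulr_ge0 // addr_ge0.
    nra.
  - have hmin : dl <= Num.min (e y) Rad by rewrite le_min hy; lra.
    have hU : U a y <= expR (- a * dl ^+ 2).
      rewrite ler_expR; have : dl ^+ 2 <= e y ^+ 2 by nra.
      nra.
    have hW : W a y <= expR (- a * dl ^+ 2).
      rewrite ler_expR; have : dl ^+ 2 <= Num.min (e y) Rad ^+ 2 by nra.
      nra.
    have hUK : U a y / Da <= K by rewrite /K ler_wpM2r // ltW.
    have hWK : W a y / Da <= K by rewrite /K ler_wpM2r // ltW.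
    have -> : p yhat / Da * U a y - W a y / Da * p y = p yhat * (U a y / Da) - (W a y / Da) * p y by ring.
    apply: le_trans (ler_normB _ _) _.
    rewrite (normrM (p yhat) (U a y / Da)) (normrM (W a y / Da) (p y)) (ger0_norm (_ : 0 <= U a y / Da)); last by rewrite mulr_ge0 // ltW.
    rewrite (ger0_norm (_ : 0 <= W a y / Da)); last by rewrite mulr_ge0 // ltW.
    have : 0 <= U a y / Da by rewrite mulr_ge0 // ltW.
    have : 0 <= W a y / Da by rewrite mulr_ge0 // ltW.
    have : 0 <= eps / 2 * (U a y / Da) by rewrite mulr_ge0 // ?mulr_ge0 // ltW // divr_gt0.
    nra.
rewrite RintegralD //.
rewrite (_ : Rintegral N setT (fun y => eps / 2 * (U a y / Da)) = eps / 2); last first.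
  rewrite (@eq_Rintegral _ _ _ N setT (fun y => (eps / 2 / Da) * U a y)); last first.
    by move=> y _; rewrite mulrA mulrAC.
  rewrite RintegralZl //.
  rewrite (_ : Rintegral N setT (fun x => U a x) = Da) //.
  by rewrite divfK // gt_eqF.
rewrite RintegralZl // RintegralD //; last exact: (integrable_norm Hp1).
rewrite Rintegral_cst // -/C.
lra.
Qed.
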